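(* Let $\mathbb D=\{z\in\mathbb C:|z|\le1\}$ and let $B:\mathbb Z\times\mathbb Z\to\mathbb D$. For $n\in\mathbb Z$ and $l\in\{0,1,2,\ldots\}$ put $$s_n^B(l)=\Big(\frac{\pi}{\sqrt3}\Big)^l\Big(1-\frac{3}{\pi^2}\sum_{k\in\mathbb Z,\,k\neq n}\frac{|B(n,k)|^l}{(k-n)^2}\Big)$$ (with $|B(n,k)|^0=1$). Assume there is $l_0\in\{1,2,\ldots\}$ such that $s_n^B(l_0)=0$ for all $n\in\mathbb Z$. Then $|B(n,k)|=1$ for all $n,k\in\mathbb Z$ with $n\neq k$, and $s_n^B(l)=0$ for all $n\in\mathbb Z$ and all $l=0,1,2,\ldots$.
   Context: The sequence $(s_n^B(l))_{l}$ is called the $n$-th noise sequence of $B$. *)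

(* Defs.v *)
From HB Require Import structures.
From mathcomp Require Import all_boot all_order all_algebra.
From mathcomp Require Import all_classical all_reals.
From mathcomp Require Import ereal esum trigo.
From mathcomp Require Import complex.
Set Implicit Arguments. Unset Strict Implicit. Unset Printing Implicit Defensive.
Import Order.TTheory GRing.Theory Num.Theory.
Local Open Scope classical_set_scope.
Local Open Scope ring_scope.

Definition cmod (R : realType) (z : R[i]) : R := Normc.normc z.

(* The sum over Z \ {n} is the unordered sum (esum) of nonnegative terms;
   it is finite (<= pi^2/3) since |B| <= 1, so `fine` recovers its real value. *)
Definition noise_seq (R : realType) (B : int -> int -> R[i]) (n : int) (l : nat) : R :=
  (pi / Num.sqrt 3) ^+ l *
  (1 - 3 / pi ^+ 2 *
       fine (\esum_(k in [set k : int | k != n])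
               ((cmod (B n k)) ^+ l / ((k - n)%:~R) ^+ 2)%:E)).

(* Main.v *)
Require Import Defs.
From HB Require Import structures.
From mathcomp Require Import all_boot all_order all_algebra.
From mathcomp Require Import all_classical all_reals.
From mathcomp Require Import ereal esum trigo derive sequences normedtype realfun.
From mathcomp Require Import complex.
From mathcomp Require Import ring lra zify.
Import Order.TTheory GRing.Theory Num.Theory.
Import numFieldNormedType.Exports.
Local Open Scope classical_set_scope.
Local Open Scope ring_scope.
Lemma sin_within_cont (R : realType) (x : R) : {within `[0, x], continuous (@sin R)}.
Proof. by apply: derivable_within_continuous => z _; exact: ex_derive. Qed.
Section Basel.
Variable R : realType.
Definition cs (x : R) := (sin x ^+ 2)^-1.
Definition ang (M j : nat) : R := (2*j+1)%:R * pi / (4*M)%:R.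

Lemma sin_le_id (x : R) : 0 <= x -> sin x <= x.
Proof.
rewrite le_eqVlt => /orP[/eqP <-|x0]; first by rewrite sin0.
have csin := @sin_within_cont R x.
have [c _ h] := @MVT R sin cos 0 x x0 (fun y _ => is_derive_sin y) csin.
move: h; rewrite sin0 !subr0 => ->.
by apply: ler_piMl; [exact: ltW | exact: cos_le1].
Qed.

Lemma csc_double x : 0 < x < pi -> cs x = (cs (x/2) + cs (pi/2 - x/2)) / 4.
Proof.
move=> /andP[x0 xpi].
have s0 : 0 < sin (x/2) by apply: sin_gt0_pi; lra.
have c0 : 0 < cos (x/2) by apply: cos_gt0_pihalf; lra.
rewrite /cs sinB sin_pihalf cos_pihalf mul0r mul1r subr0.
rewrite {1}(_ : x = (x/2) *+ 2); last by rewrite -mulr_natr; field.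
rewrite sin_mulr2n exprMn_n exprMn cos2sin2.
have h1 : sin (x/2) ^+ 2 != 0 by rewrite expf_neq0 // gt_eqF.
have h2 : 1 - sin (x/2) ^+ 2 != 0.
  by rewrite -cos2sin2 expf_neq0 // gt_eqF.
by field; rewrite h2 gt_eqF.
Qed.

Lemma csc_sum_step N : (0 < N)%N -> \sum_(k < N) cs (ang N k) = 2 * N%:R ^+ 2 ->
  \sum_(k < N + N) cs (ang (N+N) k) = 2 * (N+N)%:R ^+ 2.
Proof.
move=> N0 IH.
rewrite big_split_ord /=.
rewrite [X in _ + X](reindex_inj rev_ord_inj) /=.
rewrite -big_split /=.
have key : forall k : 'I_N, cs (ang (N+N) k) + cs (ang (N+N) (N + (N - k.+1))) = 4 * cs (ang N k).
  move=> k.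
  have kN := ltn_ord k.
  have Nr : (N%:R : R) != 0 by rewrite pnatr_eq0 -lt0n.
  have pi0 := @pi_gt0 R.
  have x0 : 0 < ang N k by rewrite /ang mulr_gt0 // ?invr_gt0 ?mulr_gt0 ?ltr0n //; lia.
  have xpi : ang N k < pi.
    rewrite /ang ltr_pdivrMr ?ltr0n; last lia.
    rewrite mulrC ltr_pM2l // ltr_nat; lia.
  rewrite (@csc_double (ang N k)); last by rewrite x0 xpi.
  rewrite /ang.
  have e1 : (2 * (N + (N - k.+1)) + 1)%:R = (4*N)%:R - (2*k+1)%:R :> R.
    apply/eqP; rewrite eq_sym subr_eq -natrD; apply/eqP; congr (_%:R); lia.
  rewrite e1 !natrM !natrD.
  rewrite [RHS]mulrC divfK; last by rewrite pnatr_eq0.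
  by congr (cs _ + cs _); field; rewrite Nr -natrD pnatr_eq0; lia.
rewrite (eq_bigr _ (fun k _ => key k)) -mulr_sumr IH natrD; ring.
Qed.

Lemma cs_piquarter : cs (pi / 4) = 2.
Proof.
have pi0 := @pi_gt0 R.
have h := @csc_double (pi/2).
rewrite /cs sin_pihalf expr1n invr1 in h.
have e : pi / 2 - pi / 2 / 2 = pi / 4 :> R by field.
have e2 : pi / 2 / 2 = pi / 4 :> R by field.
rewrite e e2 in h.
have q : 0 < (pi : R) / 2 < pi by apply/andP; split; lra.
have {}h := h q.
rewrite /cs; set c := (sin (pi/4) ^+ 2)^-1 in h *.
lra.
Qed.

Lemma csc_sum n : \sum_(k < 2^n) cs (ang (2^n) k) = 2 * (2^n)%:R ^+ 2.
Proof.
elim: n => [|n IH].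
  rewrite expn0 big_ord1 /ang /= expr1n mulr1 -cs_piquarter; congr cs; rewrite mul1r; congr (_ / _).
rewrite expnS mul2n -addnn; apply: csc_sum_step => //.
by rewrite expn_gt0.
Qed.

Lemma odd_bound_pow n : \sum_(k < 2^n) ((2*k+1)%:R ^+ 2)^-1 <= pi ^+ 2 / 8 :> R.
Proof.
set N := (2^n)%N.
have N0 : (0 < N)%N by rewrite expn_gt0.
have Nr : 0 < (N%:R : R) by rewrite ltr0n.
have pi0 := @pi_gt0 R.
apply: (@le_trans _ _ (\sum_(k < N) (pi ^+ 2 / (16 * N%:R ^+ 2)) * cs (ang N k))).
  apply: ler_sum => k _.
  have a0 : 0 < ang N k by rewrite /ang mulr_gt0 // ?invr_gt0 ?mulr_gt0 ?ltr0n //; lia.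
  have api : ang N k < pi.
    rewrite /ang ltr_pdivrMr ?ltr0n; last lia.
    rewrite mulrC ltr_pM2l // ltr_nat; have := ltn_ord k; lia.
  have s0 : 0 < sin (ang N k) by apply: sin_gt0_pi; rewrite a0 api.
  have sl := @sin_le_id (ang N k) (ltW a0).
  have : (ang N k ^+ 2)^-1 <= cs (ang N k).
    rewrite /cs lef_pV2 ?posrE ?exprn_gt0 //.
    by rewrite lerXn2r // nnegrE ltW.
  rewrite /ang => h.
  apply: le_trans (ler_wpM2l _ h); last by rewrite divr_ge0 ?sqr_ge0 // mulr_ge0 // sqr_ge0.
  rewrite le_eqVlt; apply/orP; left; apply/eqP.
  have k0 : ((2 * k + 1)%:R : R) != 0 by rewrite pnatr_eq0; lia.
  have kk : (0:R) <= k%:R := ler0n _ _.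
  have k1 : (2 * k%:R + 1 : R) != 0 by apply: lt0r_neq0; lra.
  move: pi0; move: (pi : R) => p p0.
  rewrite natrM; field.
  by rewrite k1 !gt_eqF.
rewrite -mulr_sumr csc_sum.
rewrite le_eqVlt; apply/orP; left; apply/eqP.
by field; rewrite gt_eqF.
Qed.

Definition Tz (M : nat) : R := \sum_(j < M) ((j.+1)%:R ^+ 2)^-1.
Definition Oz (M : nat) : R := \sum_(j < M) ((2*j+1)%:R ^+ 2)^-1.

Lemma sum_mono (f : nat -> R) (m n : nat) : (m <= n)%N -> (forall j, 0 <= f j) ->
  \sum_(j < m) f j <= \sum_(j < n) f j.
Proof.
move=> mn f0; rewrite -(subnKC mn) big_split_ord /=.
by rewrite lerDl sumr_ge0.
Qed.

Lemma Oz_bound M : Oz M <= pi ^+ 2 / 8.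
Proof.
apply: le_trans (odd_bound_pow M).
apply: (sum_mono (fun j : nat => ((2*j+1)%:R ^+ 2)^-1)); first exact/ltnW/ltn_expl.
by move=> j; rewrite invr_ge0 sqr_ge0.
Qed.

Lemma Tz_double M : Tz (M.*2) = Oz M + Tz M / 4.
Proof.
elim: M => [|M IH]; first by rewrite /Tz /Oz !big_ord0 mul0r addr0.
rewrite doubleS /Tz /Oz !big_ord_recr /= -/(Tz _) -/(Oz _) IH /= -/(Tz _).
rewrite -[(M.*2).+2]addn2 -[(M.*2).+1]addn1 -[M.+1]addn1 -!muln2 !natrD !natrM.
have m0 : (0:R) <= M%:R := ler0n _ _.
field.
by apply/and3P; split; apply: lt0r_neq0; lra.
Qed.

Lemma Tz_bound M : Tz M <= pi ^+ 2 / 6.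
Proof.
have h1 : Tz M <= Tz (M.*2).
  apply: (sum_mono (fun j : nat => ((j.+1)%:R ^+ 2)^-1)); first by rewrite -addnn leq_addr.
  by move=> j; rewrite invr_ge0 sqr_ge0.
have h2 := Tz_double M.
have h3 := Oz_bound M.
have h0 : 0 <= Tz M by apply: sumr_ge0 => j _; rewrite invr_ge0 sqr_ge0.
move: h1 h2 h3 h0; move: (pi : R) => p; lra.
Qed.
End Basel.
Local Open Scope ereal_scope.
Lemma series_Tz_le (R : realType) :
  \sum_(i <oo | i \in [set: nat]) ((((i.+1)%:R : R) ^+ 2)^-1)%:E <= (pi ^+ 2 / 6)%:E.
Proof.
apply: lime_le.
  by apply: is_cvg_nneseries => j _ _; rewrite lee_fin invr_ge0 sqr_ge0.
apply: nearW => m.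
rewrite sumEFin lee_fin.
under eq_bigl do rewrite in_setT.
rewrite big_mkord.
exact: Tz_bound.
Qed.

Lemma esum_inv_sq_le (R : realType) (n : int) :
  \esum_(k in [set k : int | k != n]) (((((k - n)%:~R : R) ^+ 2)^-1)%:E)
  <= (pi ^+ 2 / 3)%:E.
Proof.
rewrite (esumID [set k : int | (n < k)%R]); last first.
  by move=> k _; rewrite lee_fin invr_ge0 sqr_ge0.
have -> : [set k : int | k != n] `&` [set k | (n < k)%R] =
    [set (n + (j.+1)%:Z)%R | j in [set: nat]].
  apply/seteqP; split => k /=.
    move=> [kn nk]; exists `|k - n|%N.-1 => //; lia.
  by move=> [j _ <-]; split; lia.
have -> : [set k : int | k != n] `&` ~` [set k | (n < k)%R] =
    [set (n - (j.+1)%:Z)%R | j in [set: nat]].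
  apply/seteqP; split => k /=.
    move=> [kn nk]; exists `|k - n|%N.-1 => //; lia.
  by move=> [j _ <-]; split; lia.
rewrite !esum_set_image; last first.
- by move=> j1 j2 _ _ /= h; lia.
- by move=> j _; rewrite lee_fin invr_ge0 sqr_ge0.
- by move=> j1 j2 _ _ /= h; lia.
- by move=> j _; rewrite lee_fin invr_ge0 sqr_ge0.
rewrite (eq_eseriesr (g := fun i => ((((i.+1)%:R : R) ^+ 2)^-1)%:E)); last first.
  by move=> i _; rewrite addrC addKr.
rewrite [X in _ + X](eq_eseriesr (g := fun i => ((((i.+1)%:R : R) ^+ 2)^-1)%:E)); last first.
  move=> i _; rewrite (_ : (n - (i.+1)%:Z - n = - (i.+1)%:Z)%R); last lia.
  by rewrite intrN sqrrN.
apply: le_trans (leeD (series_Tz_le R) (series_Tz_le R)) _.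
by rewrite -EFinD lee_fin; lra.
Qed.

Local Close Scope ereal_scope.

Theorem proposition4p1 (R : realType) (B : int -> int -> R[i])
  (HB : forall n k : int, cmod (B n k) <= 1)
  (l0 : nat) (Hl0 : (0 < l0)%N)
  (Hs : forall n : int, noise_seq B n l0 = 0) :
  (forall n k : int, n != k -> cmod (B n k) = 1) /\
  (forall (n : int) (l : nat), noise_seq B n l = 0).
Proof.
have c0 : forall z : R[i], 0 <= cmod z.
  by case=> a b; rewrite /cmod /=; exact: sqrtr_ge0.
have pi0 := @pi_gt0 R.
have pos : 0 < pi / Num.sqrt 3 :> R by rewrite divr_gt0 // sqrtr_gt0.
have Hf : forall n, fine (\esum_(k in [set k : int | k != n])
    ((cmod (B n k)) ^+ l0 / ((k - n)%:~R) ^+ 2)%:E) = pi ^+ 2 / 3.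
  move=> n; have := Hs n; rewrite /noise_seq => /eqP; rewrite mulf_eq0 => /orP[].
    by rewrite expf_eq0 gt_eqF // andbF.
  set f := fine _ => /eqP h.
  have p2 : (pi : R) ^+ 2 != 0 by rewrite expf_neq0 // gt_eqF.
  apply: (mulfI (_ : 3 / pi ^+ 2 != 0)); first by rewrite mulf_neq0 ?invr_eq0.
  rewrite (_ : 3 / pi ^+ 2 * f = 1); last by move: h; set u := 3 / _ * f; lra.
  by move: pi0; move: (pi : R) => p p0; field; rewrite gt_eqF.
have Sfin : forall n, \esum_(k in [set k : int | k != n])
    ((cmod (B n k)) ^+ l0 / ((k - n)%:~R) ^+ 2)%:E = (pi ^+ 2 / 3)%:E.
  move=> n; have := Hf n.
  have : (0 <= \esum_(k in [set k : int | k != n])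
    ((cmod (B n k)) ^+ l0 / ((k - n)%:~R) ^+ 2)%:E)%E.
    by apply: esum_ge0 => k _; rewrite lee_fin mulr_ge0 ?exprn_ge0 // invr_ge0 sqr_ge0.
  case: (\esum_(k in _) _) => [r| |] //= _.
  - by move=> ->.
  - move=> h; have : (0 : R) < pi ^+ 2 / 3 by rewrite divr_gt0 // exprn_gt0.
    by rewrite -h ltxx.
have part1 : forall n k : int, n != k -> cmod (B n k) = 1.
  move=> n k nk.
  apply/eqP; rewrite eq_le HB /= leNgt; apply/negP => lt1.
  have d0 : 0 < ((k - n)%:~R : R) ^+ 2.
    rewrite lt_def sqr_ge0 andbT sqrf_eq0 intr_eq0 subr_eq0 eq_sym; exact: nk.
  have Sg := Sfin n.
  have E1 : [set i : int | i != n] `&` [set k] = [set k].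
    apply/seteqP; split => i /=; first by case.
    by move=> ->; split => //; rewrite eq_sym.
  rewrite (esumID [set k]) ?E1 ?esum_set1 in Sg; first last.
  - by move=> i _; rewrite lee_fin mulr_ge0 ?exprn_ge0 // invr_ge0 sqr_ge0.
  - by rewrite lee_fin mulr_ge0 ?exprn_ge0 // invr_ge0 sqr_ge0.
  have H := esum_inv_sq_le R n.
  rewrite (esumID [set k]) ?E1 ?esum_set1 in H; first last.
  - by move=> i _; rewrite lee_fin invr_ge0 sqr_ge0.
  - by rewrite lee_fin invr_ge0 sqr_ge0.
  have RgRh : (\esum_(i in [set i : int | i != n] `&` ~` [set k])
      ((cmod (B n i)) ^+ l0 / ((i - n)%:~R) ^+ 2)%:E <=
      \esum_(i in [set i : int | i != n] `&` ~` [set k])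
      ((((i - n)%:~R : R) ^+ 2)^-1)%:E)%E.
    apply: le_esum => i _; rewrite lee_fin.
    by apply: ler_piMl; [rewrite invr_ge0 sqr_ge0 | rewrite exprn_ile1].
  have Rg0 : (0 <= \esum_(i in [set i : int | i != n] `&` ~` [set k])
      ((cmod (B n i)) ^+ l0 / ((i - n)%:~R) ^+ 2)%:E)%E.
    by apply: esum_ge0 => i _; rewrite lee_fin mulr_ge0 ?exprn_ge0 // invr_ge0 sqr_ge0.
  have Rh0 : (0 <= \esum_(i in [set i : int | i != n] `&` ~` [set k])
      ((((i - n)%:~R : R) ^+ 2)^-1)%:E)%E.
    by apply: esum_ge0 => i _; rewrite lee_fin invr_ge0 sqr_ge0.
  have gh : cmod (B n k) ^+ l0 / ((k - n)%:~R) ^+ 2 < (((k - n)%:~R : R) ^+ 2)^-1.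
    by rewrite gtr_pMl ?invr_gt0 // expr_lt1.
  move: Sg H RgRh Rg0 Rh0 gh.
  set gk := cmod (B n k) ^+ l0 / _.
  set hk := (_ ^+ 2)^-1.
  case: (\esum_(i in _) ((cmod (B n i)) ^+ l0 / _)%:E) => [s| |];
  case: (\esum_(i in _) ((_ ^+ 2)^-1)%:E) => [r| |] //=.
  move=> /eqP; rewrite -EFinD eqe => /eqP Sg; rewrite -EFinD !lee_fin => H sr _ _ ghk.
  move: Sg H sr ghk; move: (pi : R) => p; lra.
split => //.
move=> n l; rewrite /noise_seq.
rewrite (eq_esum (b := fun k => ((cmod (B n k)) ^+ l0 / ((k - n)%:~R) ^+ 2)%:E)); last first.
  by move=> k /= kn; rewrite part1 1?eq_sym // !expr1n.
rewrite Sfin /=.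
have p2 : (pi : R) ^+ 2 != 0 by rewrite expf_neq0 // gt_eqF.
rewrite (_ : 1 - 3 / pi ^+ 2 * (pi ^+ 2 / 3) = 0 :> R) ?mulr0 //.
by move: pi0; move: (pi : R) => p p0; field; rewrite gt_eqF.
Qed.
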